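(* Let $\delta\le10^{-7}$ be the deletion probability, let $m>n$, $w=10000\log m$, and $d=10\frac{\log m}{\log(1/\delta)}$. Let $X$ be a set of $m^2$ independent traces of a string $S=p_1,\ldots,p_n$, and for each $x\in X$ let $i_x$ be uniform in $\{1,\ldots,n-3w+1\}$, $L_x=x_{i_x},\ldots,x_{i_x+w-1}$ and $R_x=x_{i_x+2w},\ldots,x_{i_x+3w-1}$. Then with probability at least $1-O(m^{-0.2})$, no $x\in X$ has more than $d$ deletions within $L_x$ or within $R_x$.
   Context: A trace is generated from $S$ by sampling independent bits $t_k$ with $\Pr[t_k=1]=p_k$, deleting each independently with probability $\delta$, and concatenating survivors. For a block of $w$ consecutive trace bits originating from original positions $a_1<\cdots<a_w$, the number of deletions within the block is $(a_w-a_1+1)-w$, the number of original positions between its first and last bits that were deleted. $\log$ denotes the natural logarithm. *)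

(* Defs.v *)
From mathcomp Require Import all_boot all_order all_algebra.
From mathcomp Require Import all_classical all_reals all_analysis.
Set Implicit Arguments. Unset Strict Implicit. Unset Printing Implicit Defensive.
Import Order.TTheory GRing.Theory Num.Theory.
Local Open Scope ring_scope.

(* One sampled trace (together with its random start index):
   - kept j  : original position j (0-based) survives the deletion channel,
   - bits j  : the sampled bit t_j,
   - i       : i_x - 1, where i_x is uniform in {1,...,k}. *)
Definition outcome (n k : nat) : finType :=
  ({ffun 'I_n -> bool} * {ffun 'I_n -> bool} * 'I_k)%type.

Definition kept_of n k (o : outcome n k) : {ffun 'I_n -> bool} := o.1.1.
Definition bits_of n k (o : outcome n k) : {ffun 'I_n -> bool} := o.1.2.
Definition start_of n k (o : outcome n k) : nat := val o.2.

Definition weight (R : realType) (delta : R) n k (p : 'I_n -> R)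
    (o : outcome n k) : R :=
  (\prod_(j < n) (if kept_of o j then 1 - delta else delta)) *
  (\prod_(j < n) (if bits_of o j then p j else 1 - p j)) / k%:R.

(* original (0-based) positions a_1 < a_2 < ... of the surviving bits,
   i.e. the trace bit x_j comes from original position (survivors`_(j-1)) *)
Definition survivors n (kept : {ffun 'I_n -> bool}) : seq nat :=
  [seq val j | j <- enum 'I_n & kept j].

Definition trace n (kept bits : {ffun 'I_n -> bool}) : seq bool :=
  [seq bits j | j <- enum 'I_n & kept j].

(* Number of deletions within the block of w consecutive trace bits starting
   at 0-based trace index s: (a_last - a_first + 1) - (#bits in block).
   If the trace is too short the block is truncated to its existing bits
   (an empty block has 0 deletions). *)
Definition block_deletions n (kept : {ffun 'I_n -> bool}) (s w : nat) : nat :=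
  let blk := take w (drop s (survivors kept)) in
  if blk is a :: _ then (last a blk - a + 1 - size blk)%N else 0%N.

Definition blocklen (R : realType) (m : nat) : nat :=
  Num.truncn (10000 * ln (m%:R : R)).

Definition dbound (R : realType) (delta : R) (m : nat) : R :=
  10 * ln (m%:R : R) / ln (delta^-1).

(* Good event: no x has more than d deletions within L_x or R_x.
   L_x = x_{i_x},...,x_{i_x+w-1}   (0-based start i_x - 1)
   R_x = x_{i_x+2w},...,x_{i_x+3w-1} (0-based start i_x - 1 + 2w) *)
Definition good_event (R : realType) (delta : R) (m n k : nat)
    (X : {ffun 'I_(m ^ 2) -> outcome n k}) : bool :=
  let w := blocklen R m in
  [forall x : 'I_(m ^ 2),
     ((block_deletions (kept_of (X x)) (start_of (X x)) w)%:R
        <= dbound delta m) &&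
     ((block_deletions (kept_of (X x)) (start_of (X x) + 2 * w) w)%:R
        <= dbound delta m)].

Definition prob_good (R : realType) (delta : R) (m n : nat) (p : 'I_n -> R) : R :=
  let k := (n - 3 * blocklen R m + 1)%N in
  \sum_(X : {ffun 'I_(m ^ 2) -> outcome n k} | good_event delta X)
     \prod_(x : 'I_(m ^ 2)) weight delta p (X x).

(* Main.v *)
Require Import Defs.
From mathcomp Require Import all_boot all_order all_algebra.
From mathcomp Require Import all_classical all_reals all_analysis.
From mathcomp Require Import zify.
From mathcomp Require Import ring lra.
Import Order.TTheory GRing.Theory Num.Theory.

Set Implicit Arguments. Unset Strict Implicit. Unset Printing Implicit Defensive.

Section Comb.
Variable n : nat.
Variable kept : {ffun 'I_n -> bool}.

Definition keptn (i : nat) : bool :=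
  if insub i is Some j then kept j else false.

Lemma keptn_ord (j : 'I_n) : keptn j = kept j.
Proof. by rewrite /keptn valK. Qed.

Lemma keptn_lt i : keptn i -> (i < n)%N.
Proof. by rewrite /keptn; case: insubP => // j _ <- _. Qed.

Lemma survE : survivors kept = seq.filter keptn (iota 0 n).
Proof.
rewrite /survivors -val_enum_ord filter_map; congr map.
apply: eq_filter => j /=; by rewrite keptn_ord.
Qed.

Definition cnt x := count keptn (iota 0 x).

Lemma cntD x y : cnt (x + y) = (cnt x + count keptn (iota x y))%N.
Proof. by rewrite /cnt iotaD count_cat. Qed.

Lemma cnt_mono x y : (x <= y)%N -> (cnt x <= cnt y)%N.
Proof. move=> h; rewrite -(subnKC h) cntD; exact: leq_addr. Qed.

Lemma cntS x : cnt x.+1 = (cnt x + keptn x)%N.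
Proof. by rewrite -addn1 cntD /= addn0. Qed.

Lemma cnt_le x : (cnt x <= x)%N.
Proof. by rewrite /cnt; apply: leq_trans (count_size _ _) _; rewrite size_iota. Qed.

Lemma cnt_nth k : (k < size (survivors kept))%N ->
  let x := nth 0%N (survivors kept) k in
  [/\ cnt x = k, keptn x & (x < n)%N].
Proof.
move=> hk x.
have xin : x \in survivors kept by exact: mem_nth.
move: (xin); rewrite survE mem_filter mem_iota /= add0n => /andP [kx xn].
split => //.
have hn : n = (x + (1 + (n - x.+1)))%N by lia.
have e : nth 0%N (survivors kept) (cnt x) = x.
  rewrite survE hn iotaD filter_cat /= kx nth_cat size_filter /cnt ltnn subnn /=.
  done.
have u : uniq (survivors kept) by rewrite survE filter_uniq // iota_uniq.
have hc : (cnt x < size (survivors kept))%N.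
  rewrite survE size_filter hn iotaD count_cat /= kx /cnt; lia.
by apply/eqP; rewrite -(nth_uniq 0%N hc hk u) e.
Qed.

Definition cntd x := count (predC keptn) (iota 0 x).

Lemma cntdE x : cntd x = (x - cnt x)%N.
Proof.
have := count_predC keptn (iota 0 x); rewrite size_iota /cntd /cnt; lia.
Qed.

Lemma comb s w D : (0 < D)%N -> (D <= block_deletions kept s w)%N ->
  exists a, [/\ (a < n)%N &
     (D <= cntd (minn (a + (w + D)) n) - cntd a)%N].
Proof.
move=> D0; rewrite /block_deletions.
set blk := take w (drop s (survivors kept)).
case eb: blk => [|a0 rest]; first by rewrite leqNgt D0.
set l := size (a0 :: rest).
have hl : l = size blk by rewrite eb.
have sz : l = minn w (size (survivors kept) - s).
  by rewrite hl /blk size_take size_drop /minn; case: ltnP.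
have l0 : (0 < l)%N by [].
have ha : a0 = nth 0%N (survivors kept) s.
  have h0 : (0 < w)%N by move: l0; rewrite sz leq_min => /andP[].
  have := @nth_take w _ 0%N 0 h0 (drop s (survivors kept)); rewrite -/blk eb /= => ->.
  by rewrite nth_drop addn0.
have lw : (l <= w)%N by rewrite sz geq_minl.
have ls : (s + l <= size (survivors kept))%N.
  move: sz; rewrite /minn; case: ltnP; lia.
have hb : last a0 (a0 :: rest) = nth 0%N (survivors kept) (s + l.-1).
  rewrite (_ : last a0 (a0 :: rest) = last 0%N (a0 :: rest)) // -(nth_last 0%N) -/l.
  rewrite -eb /blk nth_take; last by lia.
  by rewrite nth_drop.
rewrite hb -/l.
have [ca ka an] := cnt_nth (k:=s) ltac:(lia).
have [cb kb bn] := cnt_nth (k:=s + l.-1) ltac:(lia).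
rewrite -ha in ca ka an.
set b := nth 0%N (survivors kept) (s + l.-1) in cb kb bn *.
have cb1 : cnt b.+1 = (s + l)%N by rewrite cntS cb kb; lia.
have ab : (a0 <= b)%N.
  rewrite leqNgt; apply/negP => h.
  have := cnt_mono h; rewrite cb1 ca; lia.
move=> hD; exists a0; split => //.
rewrite !cntdE.
case: (leqP (b.+1) (a0 + (w + D))) => h.
- have m1 : (b.+1 <= minn (a0 + (w + D)) n)%N by rewrite leq_min h.
  have := cnt_mono m1.
  have : (cnt (minn (a0 + (w + D)) n) - cnt b.+1 <= minn (a0 + (w + D)) n - b.+1)%N.
    rewrite -(subnKC m1) cntD addKn.
    apply: leq_trans (count_size _ _) _; rewrite size_iota. lia.
  have := cnt_le a0; lia.
- have m1 : minn (a0 + (w + D)) n = (a0 + (w + D))%N by apply/minn_idPl; lia.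
  rewrite m1.
  have : (cnt (a0 + (w + D)) <= cnt b.+1)%N by apply: cnt_mono; lia.
  have := cnt_le a0; have := cnt_mono (leq_addr (w + D) a0); rewrite cntD.
  have := count_size keptn (iota a0 (w + D)); rewrite size_iota; lia.
Qed.

End Comb.

Local Open Scope ring_scope.

Lemma sum_count (T : Type) (g : pred T) (s : seq T) :
  (\sum_(i <- s) (g i : nat))%N = count g s.
Proof. by elim: s => [|x s IH]; rewrite ?big_nil ?big_cons ?IH. Qed.

Section Prob.
Variable R : realType.
Variable delta : R.
Hypothesis d0 : 0 <= delta.
Hypothesis d1 : delta <= 1.
Variable n : nat.
Ltac lrad := have := d0; have := d1; lra.

Definition Pk (kept : {ffun 'I_n -> bool}) : R :=
  \prod_(j < n) (if kept j then 1 - delta else delta).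

Lemma Pk_ge0 kept : 0 <= Pk kept.
Proof. apply: prodr_ge0 => j _; case: (kept j) => /=; lrad. Qed.

Lemma sumPk : \sum_(kept : {ffun 'I_n -> bool}) Pk kept = 1.
Proof.
rewrite /Pk -(bigA_distr_bigA (fun (i : 'I_n) (b : bool) => if b then 1 - delta else delta)) /=.
by apply: big1 => i _; rewrite big_bool /=; lrad.
Qed.

Definition win (a L : nat) (kept : {ffun 'I_n -> bool}) : nat :=
  (\sum_(i < n) ((a <= i < a + L)%N && ~~ kept i : nat))%N.

Lemma expr_sum_bool (z : R) (b : 'I_n -> bool) :
  z ^+ (\sum_(i < n) (b i : nat)) = \prod_(i < n) (if b i then z else 1).
Proof.
rewrite (big_morph (GRing.exp z) (exprD z) (expr0 z)).
by apply: eq_bigr => i _; case: (b i); rewrite ?expr1 ?expr0.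
Qed.

Lemma count_win a L k : count (fun i => (a <= i < a + L)%N) (iota 0 k) = minn (k - a) L.
Proof.
elim: k => [|k IH]; first by rewrite /= sub0n min0n.
rewrite -addn1 iotaD count_cat IH /= add0n addn0.
case: (leqP a k) => h1; case: (ltnP k (a + L)) => h2 /=; lia.
Qed.

Lemma card_win a L : (\sum_(i < n) ((a <= i < a + L)%N : nat) <= L)%N.
Proof.
rewrite -(big_mkord xpredT (fun i => ((a <= i < a + L)%N : nat))) sum_count /index_iota subn0.
by rewrite count_win geq_minr.
Qed.

Lemma window (a L D : nat) (z : R) : 1 <= z ->
  \sum_(kept : {ffun 'I_n -> bool}) Pk kept * (D <= win a L kept)%N%:R
    <= z ^- D * (1 - delta + delta * z) ^+ L.
Proof.
move=> z1.
have z0 : 0 < z by apply: (lt_le_trans _ z1).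
have step : forall kept, Pk kept * (D <= win a L kept)%N%:R <=
     z ^- D * (Pk kept * z ^+ win a L kept).
  move=> kept; rewrite mulrCA; apply: ler_wpM2l; first exact: Pk_ge0.
  case: leqP => h.
  - rewrite mulr1n -[leLHS](mulVf (expf_neq0 D (lt0r_neq0 z0))); apply: ler_wpM2l.
      by rewrite invr_ge0 exprn_ge0 // ltW.
    exact: ler_weXn2l.
  - by rewrite mulr0n mulr_ge0 // ?invr_ge0 exprn_ge0 // ltW.
apply: le_trans (ler_sum _ (fun kept _ => step kept)) _.
rewrite -mulr_sumr; apply: ler_wpM2l; first by rewrite invr_ge0 exprn_ge0 // ltW.
have -> : \sum_(kept : {ffun 'I_n -> bool}) Pk kept * z ^+ win a L kept =
   \sum_(kept : {ffun 'I_n -> bool}) \prod_(i < n)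
      ((if kept i then 1 - delta else delta) *
       (if (a <= i < a + L)%N && ~~ kept i then z else 1)).
  apply: eq_bigr => kept _; rewrite /win expr_sum_bool /Pk -big_split /=.
  by [].
rewrite -(bigA_distr_bigA (fun (i : 'I_n) (b : bool) =>
      (if b then 1 - delta else delta) *
       (if (a <= i < a + L)%N && ~~ b then z else 1))) /=.
have -> : \prod_(i < n) \sum_(b : bool) (if b then 1 - delta else delta) *
       (if (a <= i < a + L)%N && ~~ b then z else 1) =
   \prod_(i < n) (if (a <= i < a + L)%N then 1 - delta + delta * z else 1).
  apply: eq_bigr => i _; rewrite big_bool /= andbT andbF.
  by case: ifP => _; ring.
rewrite -expr_sum_bool.
apply: ler_weXn2l; last exact: card_win.
rewrite -subr_ge0; have : 0 <= delta * (z - 1) by apply: mulr_ge0 => //; lra.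
lrad.
Qed.

End Prob.

Lemma union_bound (R : realType) (T : finType) (W : T -> R) (bad : pred T) (N : nat) :
  (forall o, 0 <= W o) -> \sum_o W o = 1 ->
  1 - N%:R * (\sum_o W o * (bad o)%:R) <=
  \sum_(X : {ffun 'I_N -> T} | [forall x, ~~ bad (X x)]) \prod_x W (X x).
Proof.
move=> W0 W1.
set q := \sum_o W o * (bad o)%:R.
have tot : \sum_(X : {ffun 'I_N -> T}) \prod_x W (X x) = 1.
  rewrite -(bigA_distr_bigA (fun (x : 'I_N) o => W o)) /=.
  by apply: big1 => x _; rewrite W1.
have split : \sum_(X : {ffun 'I_N -> T}) \prod_x W (X x) =
   \sum_(X : {ffun 'I_N -> T} | [forall x, ~~ bad (X x)]) \prod_x W (X x) +
   \sum_(X : {ffun 'I_N -> T} | ~~ [forall x, ~~ bad (X x)]) \prod_x W (X x).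
  by rewrite (bigID (fun X : {ffun 'I_N -> T} => [forall x, ~~ bad (X x)])).
have badb : \sum_(X : {ffun 'I_N -> T} | ~~ [forall x, ~~ bad (X x)]) \prod_x W (X x)
    <= N%:R * q.
  apply: (@le_trans _ _ (\sum_(X : {ffun 'I_N -> T}) \sum_(x : 'I_N)
       \prod_y (W (X y) * (if y == x then (bad (X y))%:R else 1)))).
    rewrite [X in _ <= X](bigID (fun X : {ffun 'I_N -> T} => [forall x, ~~ bad (X x)])) /=.
    apply: ler_wpDl.
      apply: sumr_ge0 => X _; apply: sumr_ge0 => x _; apply: prodr_ge0 => y _.
      by apply: mulr_ge0 => //; case: eqP => _ //; case: (bad _).
    apply: ler_sum => X.
    rewrite negb_forall => /existsP [x0]; rewrite negbK => bx0.
    rewrite [X in _ <= X](bigD1 x0) //=; apply: ler_wpDr.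
      apply: sumr_ge0 => x _; apply: prodr_ge0 => y _.
      by apply: mulr_ge0 => //; case: eqP => _ //; case: (bad _).
    rewrite le_eqVlt; apply/orP; left; apply/eqP.
    apply: eq_bigr => y _; case: eqP => [->|_]; by rewrite ?bx0 mulr1.
  rewrite exchange_big /= le_eqVlt; apply/orP; left; apply/eqP.
  have -> : N%:R * q = \sum_(x < N) q by rewrite sumr_const card_ord mulr_natl.
  apply: eq_bigr => x _.
  rewrite -(bigA_distr_bigA (fun (y : 'I_N) o => W o * (if y == x then (bad o)%:R else 1))) /=.
  rewrite (bigD1 x) //= [X in _ * X]big1 ?mulr1.
    by apply: eq_bigr => o _; rewrite eqxx.
  move=> y /negbTE yx; rewrite yx; under eq_bigr do rewrite mulr1; exact: W1.
move: tot badb; rewrite split; lra.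
Qed.

Lemma sum_pair (R : realType) (I J : finType) (G : I * J -> R) :
  \sum_(o : I * J) G o = \sum_(i : I) \sum_(j : J) G (i, j).
Proof. by rewrite pair_bigA; apply: eq_bigr => -[]. Qed.

Lemma cntdS n (kept : {ffun 'I_n -> bool}) x :
  cntd kept x.+1 = (cntd kept x + ~~ keptn kept x)%N.
Proof. by rewrite /cntd -addn1 iotaD count_cat /= addn0. Qed.

Lemma count_wind n (kept : {ffun 'I_n -> bool}) a L k :
  count (fun i => (a <= i < a + L)%N && ~~ keptn kept i) (iota 0 k) =
  (cntd kept (minn (a + L) k) - cntd kept (minn a k))%N.
Proof.
elim: k => [|k IH]; first by rewrite /= !minn0.
rewrite -addn1 iotaD count_cat IH /= add0n addn0 addn1.
have mono : forall x y, (x <= y)%N -> (cntd kept x <= cntd kept y)%N.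
  move=> x y h; rewrite /cntd -(subnKC h) iotaD count_cat; exact: leq_addr.
case: (leqP a k) => h1; case: (ltnP k (a + L)) => h2 /=.
- have e1 : minn (a + L) k.+1 = k.+1 by lia.
  have e2 : minn (a + L) k = k by lia.
  have e3 : minn a k.+1 = a by lia.
  have e4 : minn a k = a by lia.
  rewrite ?e1 ?e2 ?e3 ?e4 cntdS; have := mono _ _ h1; lia.
- have e1 : minn (a + L) k.+1 = (a + L)%N by lia.
  have e2 : minn (a + L) k = (a + L)%N by lia.
  have e3 : minn a k.+1 = a by lia.
  have e4 : minn a k = a by lia.
  rewrite ?e1 ?e2 ?e3 ?e4; lia.
- have e1 : minn (a + L) k.+1 = k.+1 by lia.
  have e2 : minn (a + L) k = k by lia.
  have e3 : minn a k.+1 = k.+1 by lia.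
  have e4 : minn a k = k by lia.
  rewrite ?e1 ?e2 ?e3 ?e4; lia.
- lia.
Qed.

Lemma win_cntd n (kept : {ffun 'I_n -> bool}) a L : (a <= n)%N ->
  win a L kept = (cntd kept (minn (a + L) n) - cntd kept a)%N.
Proof.
move=> an; rewrite /win.
have -> : (\sum_(i < n) ((a <= i < a + L)%N && ~~ kept i : nat))%N =
   (\sum_(i < n) ((fun j => (a <= j < a + L)%N && ~~ keptn kept j) i : nat))%N.
  by apply: eq_bigr => i _; rewrite keptn_ord.
rewrite -(big_mkord xpredT (fun j => ((a <= j < a + L)%N && ~~ keptn kept j : nat))).
by rewrite sum_count /index_iota subn0 count_wind (minn_idPl an).
Qed.

Section Trace.
Variable R : realType.

Lemma one_block n (kept : {ffun 'I_n -> bool}) t w (d : R) : 0 <= d ->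
  ~~ ((block_deletions kept t w)%:R <= d) ->
  exists a : 'I_n, ((Num.truncn d).+1 <= win a (w + (Num.truncn d).+1) kept)%N.
Proof.
move=> d0; rewrite -ltNge => h.
have hD : ((Num.truncn d).+1 <= block_deletions kept t w)%N by rewrite truncn_lt_nat.
have [a [an ha]] := comb (ltn0Sn _) hD.
exists (Ordinal an); rewrite win_cntd /= ?(ltnW an) //.
Qed.

Lemma ind_le_sum n (P : pred 'I_n) : (exists a, P a) ->
  1 <= \sum_(a < n) (P a)%:R :> R.
Proof.
move=> [a Pa]; rewrite (bigD1 a) //= Pa; apply: ler_wpDr => //.
by apply: sumr_ge0 => i _; case: (P i).
Qed.

Lemma bad_point n (kept : {ffun 'I_n -> bool}) s w (d : R) : 0 <= d ->
  (~~ (((block_deletions kept s w)%:R <= d) &&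
       ((block_deletions kept (s + 2 * w) w)%:R <= d)))%:R
  <= 2 * \sum_(a < n) ((Num.truncn d).+1 <= win a (w + (Num.truncn d).+1) kept)%N%:R :> R.
Proof.
move=> d0.
have S0 : 0 <= \sum_(a < n) ((Num.truncn d).+1 <= win a (w + (Num.truncn d).+1) kept)%N%:R :> R.
  by apply: sumr_ge0 => i _; case: leqP.
case E: (_ && _) => /=; first by rewrite mulr_ge0.
move/negbT: E; rewrite negb_and => /orP [h|h].
- have := ind_le_sum (one_block d0 h); lra.
- have := ind_le_sum (one_block d0 h); lra.
Qed.

Lemma sumPb n (p : 'I_n -> R) :
  \sum_(bits : {ffun 'I_n -> bool}) \prod_(j < n) (if bits j then p j else 1 - p j) = 1.
Proof.
rewrite -(bigA_distr_bigA (fun (i : 'I_n) (b : bool) => if b then p i else 1 - p i)) /=.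
by apply: big1 => i _; rewrite big_bool /=; ring.
Qed.

Lemma weight_sum (delta : R) n k (p : 'I_n -> R) (f : {ffun 'I_n -> bool} -> nat -> R) :
  \sum_(o : outcome n k) weight delta p o * f (kept_of o) (start_of o)
  = k%:R^-1 * \sum_(s : 'I_k) \sum_(kept : {ffun 'I_n -> bool}) Pk delta kept * f kept s.
Proof.
rewrite /outcome.
rewrite (sum_pair (fun o : ({ffun 'I_n -> bool} * {ffun 'I_n -> bool}) * 'I_k =>
   weight delta p o * f (kept_of o) (start_of o))).
rewrite (sum_pair (fun i : {ffun 'I_n -> bool} * {ffun 'I_n -> bool} =>
   \sum_(j : 'I_k) weight delta p (i, j) * f (kept_of (i, j)) (start_of (i, j)))).
under eq_bigr do rewrite exchange_big /=.
rewrite exchange_big /= mulr_sumr; apply: eq_bigr => s _.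
rewrite mulr_sumr; apply: eq_bigr => kept _.
rewrite /weight /kept_of /bits_of /start_of /=.
rewrite -[X in _ = X]mulr1 -[X in _ = _ * X](sumPb p) !mulr_sumr; apply: eq_bigr => bits _.
rewrite /Pk; ring.
Qed.
End Trace.

Lemma u_small (R : realType) (u delta : R) : 0 <= u -> u ^+ 5 = delta ^+ 3 ->
  0 <= delta -> delta <= 10 ^- 7 -> u <= 7 / 10 ^+ 5.
Proof.
move=> u0 e d0 d1; rewrite leNgt; apply/negP => h.
have t0 : (0 : R) < 10 ^+ 5 by rewrite exprn_gt0.
have h1 : (7 / 10 ^+ 5 : R) ^+ 5 < u ^+ 5.
  by rewrite ltrXn2r // divr_ge0 // ltW.
have h2 : delta ^+ 3 <= (10 ^- 7 : R) ^+ 3.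
  by apply: lerXn2r => //; rewrite nnegrE // invr_ge0 exprn_ge0.
have : (7 / 10 ^+ 5 : R) ^+ 5 < (10 ^- 7 : R) ^+ 3 by apply: lt_le_trans h1 _; rewrite e.
rewrite expr_div_n -exprVn -!exprM.
rewrite ltr_pdivrMr ?exprn_gt0 //.
rewrite -[(5 * 5)%N]/(4 + 21)%N exprD exprVn mulrA.
have t21 : (0 : R) < 10 ^+ 21 by rewrite exprn_gt0.
rewrite mulrAC mulVf ?gt_eqF // mul1r.
rewrite -!natrX ltr_nat.
by [].
Qed.

Lemma expR1_le4 (R : realType) : expR (1 : R) <= 4.
Proof.
have h := expR_ge1Dx (- (1/2) : R).
have e : expR (1/2 : R) * expR (- (1/2)) = 1 by rewrite -expRD subrr expR0.
have p : 0 < expR (1/2 : R) by apply: expR_gt0.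
have h2 : expR (1/2 : R) <= 2.
  have := ler_wpM2l (ltW p) h; rewrite e; lra.
have -> : (1 : R) = 1/2 + 1/2 by field.
rewrite expRD; have : 0 <= expR (1/2 : R) by exact: ltW.
nra.
Qed.

Lemma lra_aux1 (R : realType) (w D d lm : R) : w <= 10000 * lm -> D <= d + 1 -> d <= 10 * lm ->
  w + D <= 10000 * lm + 10 * lm + 1.
Proof. move=> *; lra. Qed.

Lemma lra_aux2 (R : realType) (u lm x : R) : 0 <= lm -> 0 <= u -> u <= 7 / (10 * 10000) ->
  u * lm <= 7 / (10 * 10000) * lm ->
  x <= u * (10000 * lm + 10 * lm + 1) -> x <= 4/5 * lm + 1.
Proof. move=> *; lra. Qed.

Lemma numeric (R : realType) (delta : R) (m n : nat) :
  0 < delta -> delta <= 10 ^- 7 -> (0 < m)%N -> (n < m)%N ->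
  forall w d D z, w = blocklen R m -> d = dbound delta m -> D = (Num.truncn d).+1 ->
  z = expR (2/5 * ln delta^-1) ->
  (m ^ 2)%:R * (2 * n%:R * (z ^- D * (1 - delta + delta * z) ^+ (w + D)))
    <= 2 * expR 1 * (m%:R `^ (- (1/5))).
Proof.
move=> dp d7 m0 nm w d D z ew ed' eD ez.
set lm := ln (m%:R : R).
set la := ln (delta^-1).
have m0R : (0 : R) < m%:R by rewrite ltr0n.
have lm0 : 0 <= lm by apply: ln_ge0; rewrite ler1n.
have emR : expR lm = m%:R by rewrite /lm lnK // posrE.
have dinv : 10 ^+ 7 <= delta^-1.
  by rewrite -[X in X <= _](invrK (10 ^+ 7)) lef_pV2 ?posrE ?invr_gt0 ?exprn_gt0.
have dinvp : 0 < delta^-1 by rewrite invr_gt0.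
have ela : expR la = delta^-1 by rewrite /la lnK // posrE.
have la1 : 1 <= la.
  rewrite leNgt; apply/negP => h.
  move: h; rewrite -ltr_expR ela => h'.
  have := expR1_le4 R.
  have : (4 : R) < 10 ^+ 7 by rewrite -(natrX _ 10 7) ltr_nat.
  lra.
have ed : expR (- la) = delta by rewrite expRN ela invrK.
have d0 : 0 <= d by rewrite ed' /dbound -/lm -/la divr_ge0 // ?mulr_ge0 //; lra.
have Dgt : d < D%:R by rewrite eD truncnS_gt.
have Dle : D%:R <= d + 1 by rewrite eD -addn1 natrD lerD2r truncn_le.
have lad : la * d = 10 * lm by rewrite ed' /dbound -/lm -/la mulrC divfK //; lra.
have d10 : d <= 10 * lm.
  rewrite ed' /dbound -/lm -/la ler_pdivrMr; last lra.
  have : 0 <= 10 * lm by lra.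
  nra.
have la0 : 0 < la by lra.
rewrite -/la in ez; have elm : ln (m%:R : R) = lm by [].
clearbody lm la.
have z1 : 1 <= z by rewrite ez; apply: ltW; rewrite expR_gt1; lra.
have zD : z ^- D = expR (- (2/5 * la * D%:R)) by rewrite ez -expRM_natr expRN.
have zDle : z ^- D <= expR (- (4 * lm)).
  rewrite zD ler_expR lerN2.
  have : la * d <= la * D%:R by apply: ler_wpM2l; lra.
  lra.
set u := delta * z.
have eu : u = expR (- (3/5 * la)).
  rewrite /u ez -ed -expRD; congr expR. lra.
have u0 : 0 <= u by rewrite eu; apply: ltW; exact: expR_gt0.
have u5 : u ^+ 5 = delta ^+ 3.
  by rewrite eu -ed -!expRM_natr; congr expR; rewrite !mulNr; congr (- _); lra.
have us := u_small u0 u5 (ltW dp) d7.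
have dl1 : delta <= 1 by rewrite -ed -expR0 ler_expR; lra.
set c := 1 - delta + u.
have c0 : 0 <= c by rewrite /c; lra.
have cle : c <= expR u by have := expR_ge1Dx u; rewrite /c; lra.
have wle : w%:R <= 10000 * lm.
  rewrite ew /blocklen elm truncn_le; apply: mulr_ge0; [exact: ler0n | exact: lm0].
have hT : (10:R) * 10000 <= 10 ^+ 5 by rewrite -natrM -natrX ler_nat.
have us' : u <= 7 / (10 * 10000).
  apply: (le_trans us); apply: ler_wpM2l; first exact: ler0n.
  rewrite lef_pV2 ?posrE; [exact: hT | exact: exprn_gt0 | ].
  apply: mulr_gt0; exact: ltr0Sn.
have ulm : u * lm <= 7 / (10 * 10000) * lm by apply: ler_wpM2r.
have uwD : u * (w + D)%:R <= 4/5 * lm + 1.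
  have X : (w + D)%:R <= 10000 * lm + 10 * lm + 1 :> R by rewrite natrD; exact: lra_aux1 wle Dle d10.
  exact: lra_aux2 lm0 u0 us' ulm (ler_wpM2l u0 X).
have cw : c ^+ (w + D) <= expR (4/5 * lm + 1).
  apply: (@le_trans _ _ (expR u ^+ (w + D))).
    apply: lerXn2r; [rewrite nnegrE; exact: c0 | rewrite nnegrE; exact: ltW (expR_gt0 _) | exact: cle].
  by rewrite -expRM_natr ler_expR.
have A : z ^- D * c ^+ (w + D) <= expR (- (4 * lm)) * expR (4/5 * lm + 1).
  have z0 : 0 <= z := le_trans ler01 z1.
  apply: ler_pM => //; [by rewrite invr_ge0 exprn_ge0 | exact: exprn_ge0].
have Bn : n%:R <= m%:R :> R by rewrite ler_nat ltnW.
have X0 : 0 <= z ^- D * c ^+ (w + D).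
  have z0 : 0 <= z := le_trans ler01 z1.
  by rewrite mulr_ge0 // ?invr_ge0 exprn_ge0.
apply: (@le_trans _ _ ((m ^ 2)%:R * (2 * m%:R * (expR (- (4 * lm)) * expR (4/5 * lm + 1))))).
  apply: ler_wpM2l => //; apply: ler_pM => //.
  by apply: ler_wpM2l.
rewrite /powR (negbTE (lt0r_neq0 m0R)) elm.
have -> : (m ^ 2)%:R * (2 * m%:R * (expR (- (4 * lm)) * expR (4/5 * lm + 1))) =
   2 * expR (lm + lm + lm + - (4 * lm) + (4/5 * lm + 1)) :> R.
  by rewrite !expRD natrX -emR; ring.
rewrite -[X in _ <= X]mulrA; apply: ler_wpM2l => //; rewrite -expRD le_eqVlt; apply/orP; left; apply/eqP; congr expR; lra.
Qed.

Unset Implicit Arguments.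

Theorem lemma10 (R : realType) :
  exists C : R, exists M0 : nat, 0 < C /\
  forall (delta : R) (m n : nat) (p : 'I_n -> R),
    0 < delta -> delta <= 10 ^- 7 ->
    (M0 <= m)%N -> (n < m)%N ->
    (3 * blocklen R m <= n)%N ->
    (forall j, 0 <= p j <= 1) ->
    1 - C * (m%:R `^ (- (1 / 5))) <= prob_good delta m p.
Proof.
exists (2 * expR 1), 1%N; split; first by rewrite mulr_gt0 // expR_gt0.
move=> delta m n p dp d7 m1 nm w3 hp.
rewrite /prob_good.
set w := blocklen R m.
set k := (n - 3 * w + 1)%N.
set d := dbound delta m.
set D := (Num.truncn d).+1.
set z := expR (2/5 * ln delta^-1).
have k0 : (0 < k)%N by rewrite /k addn1.
have kR : (k%:R : R) != 0 by rewrite pnatr_eq0 -lt0n.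
have dl1 : delta <= 1.
  apply: (le_trans d7); rewrite invf_le1 ?exprn_gt0 // exprn_ege1 //.
  by rewrite ler1n.
have d0 : 0 <= delta by apply: ltW.
set bad := fun o : outcome n k =>
  ~~ (((block_deletions (kept_of o) (start_of o) w)%:R <= d) &&
      ((block_deletions (kept_of o) (start_of o + 2 * w) w)%:R <= d)).
have -> : \sum_(X : {ffun 'I_(m ^ 2) -> outcome n k} | good_event delta X)
     \prod_x weight delta p (X x) =
   \sum_(X : {ffun 'I_(m ^ 2) -> outcome n k} | [forall x, ~~ bad (X x)])
     \prod_x weight delta p (X x).
  apply: eq_bigl => X; rewrite /good_event; apply: eq_forallb => x.
  by rewrite /bad negbK.
have W0 : forall o : outcome n k, 0 <= weight delta p o.
  move=> o; rewrite /weight; apply: mulr_ge0; last by rewrite invr_ge0.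
  apply: mulr_ge0; first exact: (Pk_ge0 d0 dl1).
  apply: prodr_ge0 => j _; have := hp j; case: (bits_of o j) => /andP [h1 h2] //.
  by rewrite subr_ge0.
have W1 : \sum_(o : outcome n k) weight delta p o = 1.
  have := weight_sum delta k p (fun _ _ => 1).
  under eq_bigr do rewrite mulr1.
  move=> ->; under eq_bigr do under eq_bigr do rewrite mulr1.
  under eq_bigr do rewrite sumPk //.
  by rewrite sumr_const card_ord -[X in _ * X]mulr_natl mulr1 mulVf.
have ub := union_bound bad (m ^ 2) W0 W1.
apply: le_trans ub; rewrite lerD2l lerN2.
set B := z ^- D * (1 - delta + delta * z) ^+ (w + D).
have z1 : 1 <= z.
  have lnd : 0 <= ln (delta^-1) by apply: ln_ge0; rewrite invf_ge1.
  rewrite /z; apply: le_trans (expR_ge1Dx _); rewrite lerDl; exact: mulr_ge0.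
have hq : \sum_(o : outcome n k) weight delta p o * (bad o)%:R <= 2 * n%:R * B.
  have := weight_sum delta k p (fun kept s =>
    (~~ (((block_deletions kept s w)%:R <= d) &&
      ((block_deletions kept (s + 2 * w) w)%:R <= d)))%:R).
  move=> ->.
  have dd0 : 0 <= d.
    rewrite /d /dbound; apply: divr_ge0.
      apply: mulr_ge0 => //; apply: ln_ge0; rewrite ler1n; apply: leq_trans m1.
    by [].
    apply: ln_ge0; by rewrite invf_ge1.
  apply: (@le_trans _ _ (k%:R^-1 * \sum_(s < k) (2 * n%:R * B))).
    apply: ler_wpM2l; first by rewrite invr_ge0.
    apply: ler_sum => s _.
    apply: (@le_trans _ _ (\sum_kept Pk delta kept *
        (2 * \sum_(a < n) (D <= win a (w + D) kept)%N%:R))).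
      apply: ler_sum => kept _; apply: ler_wpM2l; first exact: Pk_ge0.
      exact: bad_point.
    under eq_bigr do rewrite mulrCA mulr_sumr.
    rewrite -mulr_sumr exchange_big /= -mulrA; apply: ler_wpM2l => //.
    have -> : n%:R * B = \sum_(a < n) B by rewrite sumr_const card_ord mulr_natl.
    apply: ler_sum => a _.
    have H := @window R delta d0 dl1 n a (w + D) D z z1.
    by apply: le_trans H _; rewrite /B.
  rewrite sumr_const card_ord -[X in _ * X <= _]mulr_natl mulKf //.
apply: (@le_trans _ _ ((m ^ 2)%:R * (2 * n%:R * B))).
  by apply: ler_wpM2l.
apply: numeric => //.
Qed.
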